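(* Let $\kappa$ and $\lambda$ be positive integers, $p$ a prime number, $x \in \mathbb{Z}_p$ a $p$-adic integer that is algebraic over $\mathbb{Q}$, and $(x_n)_{n\ge1}$ a nondecreasing sequence of positive integers such that $x_n \equiv x \pmod{p^n}$ in $\mathbb{Z}_p$ for every $n$. If $(x_n)$ is not eventually constant, then $x_n \ge \lambda n + \kappa$ for every sufficiently large $n$. *)

(* Defs.v *)
From mathcomp Require Import all_boot all_order all_algebra.
Set Implicit Arguments. Unset Strict Implicit. Unset Printing Implicit Defensive.
Import GRing.Theory Num.Theory.

(* The ring Z_p of p-adic integers, as the inverse limit of the Z/p^n Z:
   an element is a coherent family of residues x_(n) in [0, p^n)
   with x_(n+1) mod p^n = x_(n).  The ring operations of Z_p act
   componentwise on these residues. *)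
Record padic_int (p : nat) := PadicInt {
  pcoord : nat -> nat ;
  pcoord_lt : forall n, pcoord n < p ^ n ;
  pcoord_coh : forall n, pcoord n.+1 %% p ^ n == pcoord n }.

(* Congruence m = x (mod p^n Z_p) for a natural number m (embedded in Z_p)
   and a p-adic integer x: x - m lies in p^n Z_p, i.e. the n-th residues agree. *)
Definition padic_congr (p : nat) (m : nat) (x : padic_int p) (n : nat) : Prop :=
  m %% p ^ n = pcoord x n.

(* P(x) = 0 in Z_p for an integer polynomial P: all residues of P(x) vanish,
   i.e. P(x_(n)) = 0 mod p^n for every n. *)
Definition padic_root (p : nat) (P : {poly int}) (x : padic_int p) : Prop :=
  forall n, ((P.[(pcoord x n)%:Z])%R = 0 %[mod (p ^ n)%:Z])%Z.

(* x in Z_p is algebraic over Q: root of a nonzero polynomial with rational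
   coefficients; after clearing denominators, of a nonzero integer polynomial. *)
Definition padic_algebraic (p : nat) (x : padic_int p) : Prop :=
  exists P : {poly int}, (P != 0)%R /\ padic_root P x.

(* Main.v *)
Require Import Defs.
From mathcomp Require Import all_boot all_order all_algebra.
From Stdlib Require Import Classical.
From mathcomp Require Import zify.
Import Order.TTheory GRing.Theory Num.Theory.
Set Warnings "-notation-overridden -ambiguous-paths".

Lemma growth k : forall c, exists N, forall n, N <= n -> c * (n.+1)^k <= 2^n.
Proof.
elim: k => [|k IH] c.
  exists c => n Hn; rewrite expn0 muln1; apply: leq_trans Hn _; exact: ltnW (ltn_expl _ _).
have [N HN] := IH (c * 3 ^ k.+1).
exists (N.*2) => n Hn.
set m := n./2.
have Hm : N <= m by rewrite /m -(half_double N) half_leq.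
have Hn2 : n.+1 <= 3 * m.+1.
  by have := odd_double_half n; rewrite -/m -addnn; case: (odd n) => /= <-; lia.
have H2 : m.*2 <= n by rewrite /m -{2}(odd_double_half n) leq_addl.
apply: (@leq_trans (c * (3 * m.+1) ^ k.+1)).
  by rewrite leq_mul2l leq_exp2r // Hn2 orbT.
apply: (@leq_trans (2 ^ m * 2 ^ m)); last first.
  by rewrite -expnD addnn leq_exp2l.
rewrite expnMn (expnSr m.+1) !mulnA.
apply: leq_mul; first exact: HN.
exact: ltn_expl.
Qed.
Local Open Scope ring_scope.

Lemma polybound_int (P : {poly int}) (m : nat) :
  `|P.[m%:Z]| <= \sum_(i < size P) `|P`_i| * (m.+1)%:Z ^+ size P.
Proof.
rewrite horner_coef; apply: le_trans (ler_norm_sum _ _ _) _.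
apply: ler_sum => i _; rewrite normrM normrX.
apply: ler_wpM2l; first exact: normr_ge0.
rewrite -!natz normr_nat -!natrX ler_nat.
apply: (@leq_trans (m.+1 ^ i)); first by case: (nat_of_ord i) => [|j]; rewrite ?expn0 ?leq_exp2r.
by rewrite leq_pexp2l // ltnW.
Qed.

Lemma polybound (P : {poly int}) (m : nat) :
  (`|P.[m%:Z]|%N <= (\sum_(i < size P) `|(P`_i)%R|%N) * m.+1 ^ size P)%N.
Proof.
rewrite -lez_nat abszE PoszM -[X in _ <= X * _]natz natr_sum -[X in _ <= _ * X]natz natrX.
apply: le_trans (polybound_int P m) _.
rewrite big_distrl /=; apply: ler_sum => i _.
by rewrite natz abszE natz.
Qed.

Lemma eval_dvd (P : {poly int}) (a b d : int) :
  (d %| a - b)%Z -> (d %| P.[a] - P.[b])%Z.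
Proof.
move=> H; rewrite !horner_coef -sumrB.
apply: rpred_sum => i _.
rewrite -mulrBr; apply: dvdz_mull.
case: (nat_of_ord i) => [|j]; first by rewrite !expr0 subrr dvdz0.
by rewrite subrXX; apply: dvdz_mulr.
Qed.

Lemma roots_bounded (P : {poly int}) : P != 0 ->
  exists B, forall m : nat, (B <= m)%N -> P.[m%:Z] != 0.
Proof.
move=> P0; apply: NNPP => Hn.
have Hall : forall B, exists m : nat, (B <= m)%N /\ P.[m%:Z] = 0.
  move=> B; apply: NNPP => HB; apply: Hn; exists B => m Bm; apply/eqP => E.
  by apply: HB; exists m.
have Hs : forall k, exists rs : seq nat, [/\ size rs = k, uniq rs & all (fun m : nat => P.[m%:Z] == 0) rs].
  elim=> [|k [rs [Hsz Hu Ha]]]; first by exists [::].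
  have [m [Hm Hr]] := Hall (\max_(j <- rs) j).+1.
  exists (m :: rs); split => /=; [by rewrite Hsz | | by rewrite Hr eqxx Ha].
  rewrite Hu andbT; apply/negP => Hin.
  have := @leq_bigmax_seq _ rs xpredT (fun j : nat => j) m Hin isT.
  by rewrite leqNgt Hm.
have [rs [Hsz Hu Ha]] := Hs (size P).
have := max_poly_roots P0 (rs := map (fun m : nat => m%:Z) rs).
rewrite size_map Hsz ltnn => H.
have A : all (root P) [seq m%:Z | m <- rs].
  apply/allP => _ /mapP [m Hm ->]; rewrite /root.
  by have /allP := Ha; apply.
have U : uniq [seq m%:Z | m <- rs] by rewrite map_inj_uniq // => u v [].
by have := H A U.
Qed.
Local Close Scope ring_scope.

Lemma grows (xs : nat -> nat) :
  (forall n, 1 <= n -> xs n <= xs n.+1) ->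
  ~ (exists N, forall n, N <= n -> xs n = xs N) ->
  forall B, exists N, 1 <= N /\ forall n, N <= n -> B <= xs n.
Proof.
move=> mono nec.
have monok : forall a k, 1 <= a -> xs a <= xs (a + k).
  move=> a k a1; elim: k => [|k IH]; first by rewrite addn0.
  by apply: leq_trans IH _; rewrite addnS mono // (leq_trans a1) // leq_addr.
have monog : forall a b, 1 <= a -> a <= b -> xs a <= xs b.
  by move=> a b a1 ab; rewrite -(subnKC ab); apply: monok.
have nc : forall N, 1 <= N -> exists n, N <= n /\ xs N < xs n.
  move=> N N1; apply: NNPP => H; apply: nec; exists N => n Nn.
  apply/eqP; rewrite eqn_leq (monog N n) // andbT leqNgt; apply/negP => Hl.
  by apply: H; exists n.
elim=> [|B [N [N1 HN]]]; first by exists 1.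
have [n [Nn Hn]] := nc N N1.
exists n; split; first exact: leq_trans N1 Nn.
move=> k nk; apply: leq_trans _ (monog _ _ (leq_trans N1 Nn) nk).
exact: leq_ltn_trans (HN N (leqnn N)) Hn.
Qed.

Lemma myexp e a b : a <= b -> a ^ e <= b ^ e.
Proof. by case: e => [|e] H; rewrite ?expn0 // leq_exp2r. Qed.

Theorem lemma4p6 (kappa lambda p : nat) (x : padic_int p) (xs : nat -> nat) :
  0 < kappa -> 0 < lambda -> prime p ->
  padic_algebraic x ->
  (forall n, 1 <= n -> 0 < xs n) ->
  (forall n, 1 <= n -> xs n <= xs n.+1) ->
  (forall n, 1 <= n -> padic_congr (xs n) x n) ->
  ~ (exists N, forall n, N <= n -> xs n = xs N) ->
  exists N, forall n, N <= n -> lambda * n + kappa <= xs n.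
Proof.
move=> k0 l0 pr [P [P0 HP]] pos mono congr nec.
set d := size P.
set C := \sum_(i < size P) `|(P`_i)%R|%N.
have [N1 HN1] := growth d (C * (lambda + kappa) ^ d).+1.
have [B HB] := (@roots_bounded P P0).
have [N2 [N21 HN2]] := @grows xs mono nec B.
exists (maxn N1 N2) => n; rewrite geq_max => /andP [n1 n2].
have n0 : 1 <= n by apply: leq_trans n2.
rewrite leqNgt; apply/negP => Hlt.
set m := xs n.
have Hb : (P.[(pcoord x n)%:Z]%R %% (p ^ n)%:Z)%Z = 0%R by rewrite (HP n) mod0z.
have Hd1 : ((p ^ n)%:Z %| P.[(pcoord x n)%:Z]%R)%Z by apply/dvdz_mod0P.
have Hd2 : ((p ^ n)%:Z %| (m%:Z - (pcoord x n)%:Z)%R)%Z.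
  rewrite -(congr n n0) /padic_congr.
  have -> : (m%:Z - (m %% p ^ n)%:Z = (m %/ p ^ n * p ^ n)%N%:Z)%R.
    by rewrite {1}(divn_eq m (p ^ n)) PoszD addrK.
  by rewrite dvdzE !absz_nat dvdn_mull.
have Hd : ((p ^ n)%:Z %| P.[m%:Z]%R)%Z.
  have -> : (P.[m%:Z] = (P.[m%:Z] - P.[(pcoord x n)%:Z]) + P.[(pcoord x n)%:Z])%R by rewrite subrK.
  by apply: rpredD => //; apply: eval_dvd.
have Hnz : (P.[m%:Z] != 0)%R by apply: HB; apply: HN2.
have Hle1 : p ^ n <= `|P.[m%:Z]%R|%N.
  apply: dvdn_leq; first by rewrite absz_gt0.
  by move: Hd; rewrite dvdzE absz_nat.
have Hle2 := polybound P m.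
have Hm1 : m.+1 <= (lambda + kappa) * n.+1 by rewrite /m; nia.
have Hle3 : C * m.+1 ^ d <= C * (lambda + kappa) ^ d * n.+1 ^ d.
  by rewrite -mulnA -expnMn leq_mul2l; apply/orP; right; apply: myexp.
have Hlt4 : C * (lambda + kappa) ^ d * n.+1 ^ d < 2 ^ n.
  apply: leq_trans (HN1 n n1); by rewrite mulSn; set X := C * _ * _; rewrite addnC -addn1 leq_add2l expn_gt0.
have Hle5 : 2 ^ n <= p ^ n by rewrite leq_exp2r // prime_gt1.
have := leq_ltn_trans (leq_trans Hle1 (leq_trans Hle2 Hle3)) (leq_trans Hlt4 Hle5).
by rewrite ltnn.
Qed.
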